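(* Let $\alpha,\beta,p\in\mathbb{C}$ be constants and let $h,g:\mathbb{Z}^2\to\mathbb{C}$ satisfy $$\widehat{h}-\widetilde{h}=\widetilde{\widetilde{g}}-g,\qquad (h+\widetilde g)\,g=\beta^2-\alpha^2 .$$ Let $\varphi_1,\varphi_2:\mathbb{Z}^2\to\mathbb{C}$ be two linearly independent solutions of the Lax pair $$\widetilde{\widetilde{\varphi}}+h\,\widetilde{\varphi}+\alpha^2\varphi=p^2\varphi,\qquad \widehat{\varphi}=\widetilde{\varphi}-g\,\varphi .$$ Then there is a constant $\rho$ such that for all $n,m\in\mathbb{Z}$ $$\varphi_1\widetilde{\varphi}_2-\varphi_2\widetilde{\varphi}_1=\varphi_1\widehat{\varphi}_2-\varphi_2\widehat{\varphi}_1=\rho\,s^{2n}t^{2m},$$ where $s^2=\alpha^2-p^2$ and $t^2=\beta^2-p^2$.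
   Context: Shift notation: for a function $f$ on $\mathbb{Z}^2$ (variables $n,m$), $\widetilde f(n,m)=f(n+1,m)$, $\widehat f(n,m)=f(n,m+1)$, and combined accents denote composed shifts. *)

(* Defs.v *)
From HB Require Import structures.
From mathcomp Require Import all_boot all_order all_algebra.
From mathcomp Require Export complex.
From mathcomp Require Export reals.
Set Implicit Arguments. Unset Strict Implicit. Unset Printing Implicit Defensive.
Import Order.TTheory GRing.Theory Num.Theory.
Local Open Scope ring_scope.

Definition tshift {T : Type} (f : int -> int -> T) : int -> int -> T :=
  fun n m => f (n + 1) m.
Definition hshift {T : Type} (f : int -> int -> T) : int -> int -> T :=
  fun n m => f n (m + 1).

Definition lin_indep2 {K : fieldType} (f1 f2 : int -> int -> K) : Prop :=
  forall c1 c2 : K, (forall n m, c1 * f1 n m + c2 * f2 n m = 0) ->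
    c1 = 0 /\ c2 = 0.

(* Main.v *)
Require Import Defs.
From HB Require Import structures.
From mathcomp Require Import all_boot all_order all_algebra.
From mathcomp Require Import complex reals.
From mathcomp Require Import ring.
Import Order.TTheory GRing.Theory Num.Theory.
Local Open Scope ring_scope.

Lemma zgeom (K : fieldType) (f : int -> K) (x : K) : x != 0 ->
  (forall n, f (n + 1) = x * f n) -> forall n, f n = f 0 * x ^ n.
Proof.
move=> x0 Hf; elim/int_rec.
- by rewrite expr0z mulr1.
- move=> n IH; have -> : (n.+1 : int) = n%:Z + 1 by rewrite intS addrC.
  by rewrite Hf IH -(addrC 1) -intS exprSz mulrCA.
- move=> n IH.
  have E : f (- n%:Z) = x * f (- (n.+1 : int)).
    by rewrite -Hf; congr f; rewrite intS; ring.
  have -> : f (- (n.+1:int)) = x^-1 * f (- n%:Z) by rewrite E mulrA mulVf // mul1r.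
  rewrite IH intS opprD expfzDr // exprN1.
  by rewrite mulrCA.
Qed.

Theorem lemma2p1 (R : realType) (alpha beta p : R[i])
  (h g phi1 phi2 : int -> int -> R[i])
  (Hh : forall n m, hshift h n m - tshift h n m
                    = tshift (tshift g) n m - g n m)
  (Hg : forall n m, (h n m + tshift g n m) * g n m = beta ^+ 2 - alpha ^+ 2)
  (Hphi1a : forall n m, tshift (tshift phi1) n m + h n m * tshift phi1 n m
                        + alpha ^+ 2 * phi1 n m = p ^+ 2 * phi1 n m)
  (Hphi1b : forall n m, hshift phi1 n m = tshift phi1 n m - g n m * phi1 n m)
  (Hphi2a : forall n m, tshift (tshift phi2) n m + h n m * tshift phi2 n m
                        + alpha ^+ 2 * phi2 n m = p ^+ 2 * phi2 n m)
  (Hphi2b : forall n m, hshift phi2 n m = tshift phi2 n m - g n m * phi2 n m)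
  (Hind : lin_indep2 phi1 phi2)
  (s t : R[i]) (Hs : s ^+ 2 = alpha ^+ 2 - p ^+ 2)
  (Ht : t ^+ 2 = beta ^+ 2 - p ^+ 2) :
  exists rho : R[i], forall n m : int,
    phi1 n m * tshift phi2 n m - phi2 n m * tshift phi1 n m
      = phi1 n m * hshift phi2 n m - phi2 n m * hshift phi1 n m /\
    phi1 n m * hshift phi2 n m - phi2 n m * hshift phi1 n m
      = rho * s ^ (2 * n) * t ^ (2 * m).
Proof.
pose W n m := phi1 n m * phi2 (n + 1) m - phi2 n m * phi1 (n + 1) m.
have E1 : forall n m, phi1 n m * hshift phi2 n m - phi2 n m * hshift phi1 n m = W n m.
  move=> n m; rewrite Hphi1b Hphi2b /W /tshift; ring.
have pp : forall (f : int -> int -> R[i]), (forall n m, hshift f n m = tshift f n m - g n m * f n m) ->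
  (forall n m, tshift (tshift f) n m + h n m * tshift f n m + alpha ^+ 2 * f n m = p ^+ 2 * f n m) ->
  forall n m, f (n + 1 + 1) m = (p^+2 - alpha^+2) * f n m - h n m * f (n+1) m.
  move=> f _ Ha n m; have := Ha n m; rewrite /tshift mulrBl => <-; ring.
have Wn : forall n m, W (n + 1) m = s^+2 * W n m.
  move=> n m; rewrite /W (pp _ Hphi1b Hphi1a) (pp _ Hphi2b Hphi2a) Hs; ring.
have Wm : forall n m, W n (m + 1) = t^+2 * W n m.
  move=> n m.
  have Hx : forall (f : int -> int -> R[i]), (forall n m, hshift f n m = tshift f n m - g n m * f n m) ->
    (forall n m, tshift (tshift f) n m + h n m * tshift f n m + alpha ^+ 2 * f n m = p ^+ 2 * f n m) ->
    f (n + 1) (m + 1) = (p^+2 - alpha^+2) * f n m - (h n m + g (n+1) m) * f (n+1) m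
     /\ f n (m + 1) = f (n+1) m - g n m * f n m.
    move=> f Hb Ha; split; last by have := Hb n m.
    have := Hb (n + 1) m; rewrite /hshift /tshift => ->.
    rewrite (pp _ Hb Ha); ring.
  have [A1 B1] := Hx _ Hphi1b Hphi1a; have [A2 B2] := Hx _ Hphi2b Hphi2a.
  rewrite /W A1 A2 B1 B2 Ht.
  have G := Hg n m; rewrite /tshift in G.
  have -> : beta ^+ 2 = (h n m + g (n + 1) m) * g n m + alpha ^+ 2 by rewrite G; ring.
  ring.
have Hexp : forall (x : R[i]) (n : int), x ^ (2 * n) = (x ^+ 2) ^ n.
  by move=> x n; rewrite exprnP exprz_exp.
case: (eqVneq s 0) => [s0|sn0].
  exists 0 => n m; split; first by rewrite E1 /W.
  rewrite E1 !mul0r.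
  have -> : n = (n - 1) + 1 by rewrite subrK.
  by rewrite Wn s0 expr0n /= mul0r.
case: (eqVneq t 0) => [t0|tn0].
  exists 0 => n m; split; first by rewrite E1 /W.
  rewrite E1 !mul0r.
  have -> : m = (m - 1) + 1 by rewrite subrK.
  by rewrite Wm t0 expr0n /= mul0r.
exists (W 0 0) => n m; split; first by rewrite E1 /W.
rewrite E1 !Hexp.
have s2 : s ^+ 2 != 0 by rewrite expf_neq0.
have t2 : t ^+ 2 != 0 by rewrite expf_neq0.
rewrite (@zgeom _ (fun k => W k m) _ s2 (fun k => Wn k m) n) (@zgeom _ (fun k => W 0 k) _ t2 (fun k => Wm 0 k) m).
by rewrite mulrAC.
Qed.
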